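(* Let $a>0$, $\theta\in(0,\pi/2)$ and $\theta_0\in[\theta,\pi/2)$. For all $w\in\mathbb{C}$ with $w\neq0$ and $-\theta_0+\theta\le\mathrm{Arg}(w)\le\theta_0$, and all $s\in\mathbb{R}$, $$|R(w,\tau_\theta(s)-a)|^2\ge\cos(\theta_0)\big(|w|^2+|\tau_\theta(s)-a|^2\big)\ge\cos^2(\theta_0)\big(|w|^2+|\tau_\theta(s)-a|^2\big).$$ Further, there exists $C>0$ depending only on $a$ and $\theta$ such that, for all $s\in\mathbb{R}$ and all $w\neq0$ with $0\le\mathrm{Arg}(w)\le\theta$, $$\Im\big(R(w,\tau_\theta(s)-a)\big)\ge[\cos(\theta-\mathrm{Arg}(w))]^{1/2}\Im(w)-C\ge\cos(\theta-\mathrm{Arg}(w))\Im(w)-C.$$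
   Context: Square roots are principal ($\sqrt z=|z|^{1/2}e^{i\mathrm{Arg}(z)/2}$, $\mathrm{Arg}(z)\in(-\pi,\pi]$) and $R(\hat z,z)=(\hat z^2+z^2)^{1/2}$ for $\hat z,z\in\mathbb{C}$. $\tau_\theta(s)=-a+(s+a)e^{i\theta}$ for $s<-a$, $s$ for $|s|\le a$, $a+(s-a)e^{i\theta}$ for $s>a$. *)

(* Defs.v *)
From Stdlib Require Import Reals.
From Coquelicot Require Import Coquelicot.
Open Scope R_scope.

(* Principal argument Arg z in (-PI, PI], with Arg 0 = 0 (irrelevant here). *)
Definition Arg (z : C) : R :=
  let x := Re z in let y := Im z in
  if Rlt_dec 0 x then atan (y / x)
  else if Rlt_dec x 0 then
    (if Rle_dec 0 y then atan (y / x) + PI else atan (y / x) - PI)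
  else if Rlt_dec 0 y then PI / 2
  else if Rlt_dec y 0 then - (PI / 2)
  else 0.

Definition Csqrt (z : C) : C :=
  (sqrt (Cmod z) * cos (Arg z / 2), sqrt (Cmod z) * sin (Arg z / 2)).

Definition Rfun (zh z : C) : C := Csqrt (zh * zh + z * z).

Definition cexpi (t : R) : C := (cos t, sin t).

Definition tau (a theta s : R) : C :=
  if Rlt_dec s (- a) then (RtoC (- a) + RtoC (s + a) * cexpi theta)%C
  else if Rle_dec s a then RtoC s
  else (RtoC a + RtoC (s - a) * cexpi theta)%C.

(* Main.v *)
Require Import Defs.
From Stdlib Require Import Reals Lra Psatz.
From Coquelicot Require Import Coquelicot.
Open Scope R_scope.

Lemma sqrt_fact (x y : R) : x <> 0 ->
  sqrt (x ^ 2 + y ^ 2) = Rabs x * sqrt (1 + (y / x)²).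
Proof.
  intro hx.
  replace (x ^ 2 + y ^ 2) with (Rabs x * Rabs x * (1 + (y / x)²)).
  - rewrite sqrt_mult_alt.
    + rewrite sqrt_square; [reflexivity|apply Rabs_pos].
    + apply Rmult_le_pos; apply Rabs_pos.
  - rewrite <- Rabs_mult. rewrite Rabs_right.
    + unfold Rsqr; field; auto.
    + nra.
Qed.

Lemma Arg_polar (z : C) :
  Cmod z * cos (Arg z) = Re z /\ Cmod z * sin (Arg z) = Im z.
Proof.
  destruct z as [x y]. unfold Cmod, Arg, Re, Im; simpl fst; simpl snd.
  assert (hS : forall u, 0 < sqrt (1 + u²)).
  { intro u. apply sqrt_lt_R0. pose proof (Rle_0_sqr u); lra. }
  destruct (Rlt_dec 0 x) as [h1|h1].
  - rewrite sqrt_fact by lra. rewrite Rabs_right by lra.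
    rewrite cos_atan, sin_atan. specialize (hS (y/x)).
    split; field_simplify; try lra; field; lra.
  - destruct (Rlt_dec x 0) as [h2|h2].
    + rewrite sqrt_fact by lra. rewrite Rabs_left by lra.
      specialize (hS (y/x)).
      destruct (Rle_dec 0 y).
      * rewrite neg_cos, neg_sin, cos_atan, sin_atan.
        split; field_simplify; try lra; field; lra.
      * replace (atan (y / x) - PI) with (atan (y/x) + PI - 2 * PI) by ring.
        rewrite cos_minus, sin_minus, cos_2PI, sin_2PI, neg_cos, neg_sin, cos_atan, sin_atan.
        split; field_simplify; try lra; field; lra.
    + assert (x = 0) by lra. subst x.
      destruct (Rlt_dec 0 y).
      * rewrite cos_PI2, sin_PI2. replace (0 ^ 2 + y ^ 2) with (y * y) by ring.
        rewrite sqrt_square by lra. lra.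
      * destruct (Rlt_dec y 0).
        -- rewrite cos_neg, sin_neg, cos_PI2, sin_PI2.
           replace (0 ^ 2 + y ^ 2) with ((-y) * (-y)) by ring.
           rewrite sqrt_square by lra. lra.
        -- assert (y = 0) by lra. subst y. rewrite cos_0, sin_0.
           replace (0 ^ 2 + 0 ^ 2) with 0 by ring. rewrite sqrt_0. lra.
Qed.

Lemma Arg_upper (z : C) : 0 <= Im z -> 0 <= Arg z <= PI.
Proof.
  destruct z as [x y]. unfold Arg, Re, Im; simpl fst; simpl snd. intro hy.
  pose proof PI_RGT_0.
  destruct (Rlt_dec 0 x) as [h1|h1].
  - pose proof (atan_bound (y/x)).
    assert (0 <= y / x) by (apply Rdiv_le_0_compat; lra).
    destruct (Req_dec (y/x) 0) as [e|e].
    + rewrite e, atan_0; lra.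
    + pose proof (atan_increasing 0 (y/x)). rewrite atan_0 in *. lra.
  - destruct (Rlt_dec x 0) as [h2|h2].
    + destruct (Rle_dec 0 y); [|lra].
      pose proof (atan_bound (y/x)).
      assert (y / x <= 0).
      { unfold Rdiv. assert (0 < / - x) by (apply Rinv_0_lt_compat; lra).
        rewrite <- (Ropp_involutive (/ x)), <- Rinv_opp. nra. }
      destruct (Req_dec (y/x) 0) as [e|e].
      * rewrite e, atan_0; lra.
      * pose proof (atan_increasing (y/x) 0). rewrite atan_0 in *. lra.
    + destruct (Rlt_dec 0 y); [lra|]. destruct (Rlt_dec y 0); lra.
Qed.

Lemma Cmod_ge0' (z : C) : 0 <= Cmod z.
Proof. unfold Cmod. apply sqrt_pos. Qed.

Lemma Csqrt_mod (z : C) : Cmod (Csqrt z) ^ 2 = Cmod z.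
Proof.
  unfold Csqrt, Cmod at 1; simpl fst; simpl snd.
  set (S := sqrt (Cmod z)). set (h := Arg z / 2).
  replace ((S * cos h) ^ 2 + (S * sin h) ^ 2) with (S * S).
  - rewrite sqrt_square by (apply sqrt_pos). unfold S.
    rewrite pow2_sqrt; [reflexivity| apply Cmod_ge0'].
  - pose proof (sin2_cos2 h). unfold Rsqr in *. nra.
Qed.

Lemma Csqrt_im (z : C) : 0 <= Im z ->
  0 <= Im (Csqrt z) /\ 2 * Im (Csqrt z) ^ 2 = Cmod z - Re z.
Proof.
  intro hy. pose proof (Arg_upper z hy) as hA. pose proof (Arg_polar z) as [hc _].
  unfold Csqrt; simpl snd. split.
  - apply Rmult_le_pos; [apply sqrt_pos|]. apply sin_ge_0; lra.
  - rewrite <- hc. replace (cos (Arg z)) with (cos (2 * (Arg z / 2))) by (f_equal; field). rewrite cos_2a_sin.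
    idtac.
    pose proof (pow2_sqrt (Cmod z) (Cmod_ge0' z)) as hp. set (S := sqrt (Cmod z)) in *. set (sn := sin (Arg z / 2)). unfold Im; simpl snd. rewrite <- hp. ring.
Qed.

Lemma tau_dec (a theta s : R) : 0 < a ->
  exists c r e, (e = 1 \/ e = -1) /\ 0 <= c <= 2 * a /\ 0 <= r /\
    Re (tau a theta s - RtoC a)%C = e * (c + r * cos theta) /\
    Im (tau a theta s - RtoC a)%C = e * (r * sin theta).
Proof.
  intro ha. unfold tau, cexpi.
  destruct (Rlt_dec s (- a)).
  - exists (2 * a), (- (s + a)), (-1).
    unfold Re, Im, RtoC; simpl. repeat split; try lra; ring.
  - destruct (Rle_dec s a).
    + exists (a - s), 0, (-1). unfold Re, Im, RtoC; simpl. repeat split; try lra; ring.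
    + exists 0, (s - a), 1. unfold Re, Im, RtoC; simpl. repeat split; try lra; ring.
Qed.

Lemma trig_cone (t0 phi : R) : -t0 <= phi <= t0 -> t0 < PI / 2 ->
  0 <= cos phi * sin t0 - sin phi * cos t0 /\ 0 <= cos phi * sin t0 + sin phi * cos t0.
Proof.
  intros h1 h2. pose proof PI_RGT_0.
  assert (0 <= sin (t0 - phi)) by (apply sin_ge_0; lra).
  assert (0 <= sin (t0 + phi)) by (apply sin_ge_0; lra).
  rewrite sin_minus in *. rewrite sin_plus in *. lra.
Qed.

Lemma part1 (a theta : R) (ha : 0 < a) (hth : 0 < theta < PI / 2) :
  forall theta0 : R, theta <= theta0 < PI / 2 ->
   forall (w : C) (s : R), w <> 0%C ->
     - theta0 + theta <= Arg w <= theta0 ->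
     let z := (tau a theta s - RtoC a)%C in
     (Cmod (Rfun w z)) ^ 2 >= cos theta0 * ((Cmod w) ^ 2 + (Cmod z) ^ 2) /\
     cos theta0 * ((Cmod w) ^ 2 + (Cmod z) ^ 2)
       >= (cos theta0) ^ 2 * ((Cmod w) ^ 2 + (Cmod z) ^ 2).
Proof.
  intros t0 ht0 w s hw hA z.
  pose proof PI_RGT_0.
  destruct (tau_dec a theta s ha) as (c & r & e & he & hc & hr & hzx & hzy).
  fold z in hzx, hzy.
  pose proof (Arg_polar w) as [hx hy].
  set (al := Arg w) in *. set (rho := Cmod w) in *.
  assert (hrho : 0 <= rho) by apply Cmod_ge0'.
  destruct w as [x y]. destruct z as [zx zy]. unfold Re, Im in *; simpl fst in *; simpl snd in *.
  assert (hk : 0 < cos t0) by (apply cos_gt_0; lra).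
  assert (hsn : 0 < sin t0) by (apply sin_gt_0; lra).
  assert (hcw : Cmod (x, y) ^ 2 = x ^ 2 + y ^ 2) by (unfold Cmod; simpl; apply pow2_sqrt; nra).
  assert (hcz : Cmod (zx, zy) ^ 2 = zx ^ 2 + zy ^ 2) by (unfold Cmod; simpl; apply pow2_sqrt; nra).
  set (k := cos t0) in *. set (sn := sin t0) in *.
  assert (hksn : k ^ 2 + sn ^ 2 = 1) by (unfold k, sn; pose proof (sin2_cos2 t0); unfold Rsqr in *; nra).
  assert (hk1 : k <= 1) by nra.
  set (A := x ^ 2 + y ^ 2). set (B := zx ^ 2 + zy ^ 2).
  assert (hB : 0 <= B) by (unfold B; nra).
  assert (hA0 : 0 <= A) by (unfold A; nra).
  destruct (trig_cone t0 al) as [e1 e2]; [lra|lra|].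
  destruct (trig_cone t0 (al - theta)) as [e3 e4]; [lra|lra|].
  rewrite cos_minus, sin_minus in e3, e4. fold k sn in e1, e2, e3, e4.
  set (co := cos theta) in *. set (si := sin theta) in *.
  set (ca := cos al) in *. set (sa := sin al) in *.
  set (P := c + r * co) in *. set (Q := r * si) in *.
  set (p := x * P + y * Q). set (q := y * P - x * Q).
  assert (hp1 : p * sn - q * k = rho * (c * (ca * sn - sa * k) + r * ((ca * co + sa * si) * sn - (sa * co - ca * si) * k))).
  { unfold p, q, P, Q. rewrite <- hx, <- hy. ring. }
  assert (hp2 : p * sn + q * k = rho * (c * (ca * sn + sa * k) + r * ((ca * co + sa * si) * sn + (sa * co - ca * si) * k))).
  { unfold p, q, P, Q. rewrite <- hx, <- hy. ring. }
  assert (hq1 : 0 <= p * sn - q * k).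
  { rewrite hp1. apply Rmult_le_pos; [lra|]. apply Rplus_le_le_0_compat; apply Rmult_le_pos; lra. }
  assert (hq2 : 0 <= p * sn + q * k).
  { rewrite hp2. apply Rmult_le_pos; [lra|]. apply Rplus_le_le_0_compat; apply Rmult_le_pos; lra. }
  assert (hpq : k ^ 2 * q ^ 2 <= sn ^ 2 * p ^ 2) by nra.
  assert (hBe : B = P ^ 2 + Q ^ 2) by (unfold B; rewrite hzx, hzy; destruct he; subst e; ring).
  assert (hAB : p ^ 2 + q ^ 2 = A * B) by (rewrite hBe; unfold p, q, A; ring).
  set (Wx := x * x - y * y + (zx * zx - zy * zy)).
  set (Wy := x * y + y * x + (zx * zy + zy * zx)).
  assert (hW : Wx ^ 2 + Wy ^ 2 = A ^ 2 + B ^ 2 + 2 * (p ^ 2 - q ^ 2)).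
  { rewrite hBe. unfold Wx, Wy, p, q, A. rewrite hzx, hzy. destruct he; subst e; ring. }
  assert (hpoly : (k * (A + B)) ^ 2 <= Wx ^ 2 + Wy ^ 2).
  { rewrite hW.
    assert (h2 : 2 * (p ^ 2 - q ^ 2) >= 2 * (k ^ 2 - sn ^ 2) * (A * B)) by (rewrite <- hAB; nra).
    assert (h3 : 0 <= sn ^ 2 * (A - B) ^ 2) by (apply Rmult_le_pos; apply pow2_ge_0).
    nra. }
  assert (hmod : Cmod (Rfun (x, y) (zx, zy)) ^ 2 = sqrt (Wx ^ 2 + Wy ^ 2)).
  { unfold Rfun. rewrite Csqrt_mod. unfold Cmod. simpl. reflexivity. }
  rewrite hmod. unfold rho. rewrite hcw, hcz. fold A B.
  split.
  - apply Rle_ge. rewrite <- (sqrt_pow2 (k * (A + B))) by nra.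
    apply sqrt_le_1_alt. exact hpoly.
  - apply Rle_ge. apply Rmult_le_compat_r; [lra|]. assert (k * k <= k * 1) by (apply Rmult_le_compat_l; lra). unfold k in *. replace (cos t0 ^ 2) with (cos t0 * cos t0) by ring. lra.
Qed.

Lemma part2 (a theta : R) (ha : 0 < a) (hth : 0 < theta < PI / 2) :
  (exists Cst : R, 0 < Cst /\
   forall (s : R) (w : C), w <> 0%C -> 0 <= Arg w <= theta ->
     let z := (tau a theta s - RtoC a)%C in
     Im (Rfun w z) >= sqrt (cos (theta - Arg w)) * Im w - Cst /\
     sqrt (cos (theta - Arg w)) * Im w - Cst >= cos (theta - Arg w) * Im w - Cst).
Proof.
  exists (2 * a). split; [lra|].
  intros s w hw hA z.
  pose proof PI_RGT_0.
  destruct (tau_dec a theta s ha) as (c & r & e & he & hc & hr & hzx & hzy).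
  fold z in hzx, hzy.
  pose proof (Arg_polar w) as [hx hy].
  set (al := Arg w) in *. set (rho := Cmod w) in *.
  assert (hrho : 0 <= rho) by apply Cmod_ge0'.
  assert (hkk : 0 <= cos (theta - al) <= 1).
  { split; [apply cos_ge_0; lra | apply COS_bound]. }
  set (kk := cos (theta - al)) in *.
  assert (hs1 : sqrt kk <= 1) by (rewrite <- sqrt_1; apply sqrt_le_1_alt; lra).
  assert (hs2 : kk <= sqrt kk).
  { pose proof (sqrt_sqrt kk (proj1 hkk)). pose proof (sqrt_pos kk). nra. }
  assert (hca : 0 <= cos al) by (apply cos_ge_0; lra).
  assert (hsa : 0 <= sin al) by (apply sin_ge_0; lra).
  assert (hco : 0 <= cos theta) by (apply cos_ge_0; lra).
  assert (hsi : 0 <= sin theta) by (apply sin_ge_0; lra).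
  assert (hdiff : 0 <= sin (theta - al)) by (apply sin_ge_0; lra).
  rewrite sin_minus in hdiff.
  destruct w as [x y]. destruct z as [zx zy]. unfold Re, Im in *; simpl fst in *; simpl snd in *.
  assert (hx0 : 0 <= x) by (rewrite <- hx; apply Rmult_le_pos; lra).
  assert (hy0 : 0 <= y) by (rewrite <- hy; apply Rmult_le_pos; lra).
  assert (hxy : 0 <= x * sin theta - y * cos theta).
  { rewrite <- hx, <- hy.
    replace (rho * cos al * sin theta - rho * sin al * cos theta)
      with (rho * (sin theta * cos al - cos theta * sin al)) by ring.
    apply Rmult_le_pos; lra. }
  assert (hrho2 : rho ^ 2 = x ^ 2 + y ^ 2) by (unfold rho, Cmod; simpl; apply pow2_sqrt; nra).
  set (co := cos theta) in *. set (si := sin theta) in *.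
  set (P := c + r * co) in *. set (Q := r * si) in *.
  assert (hP : 0 <= P) by (unfold P; nra).
  assert (hQ : 0 <= Q) by (unfold Q; nra).
  set (X := x * x - y * y + (zx * zx - zy * zy)).
  set (Y := x * y + y * x + (zx * zy + zy * zx)).
  assert (hXe : X = x ^ 2 - y ^ 2 + P ^ 2 - Q ^ 2) by (unfold X; rewrite hzx, hzy; destruct he; subst e; ring).
  assert (hYe : Y = 2 * x * y + 2 * P * Q) by (unfold Y; rewrite hzx, hzy; destruct he; subst e; ring).
  assert (hY : 0 <= Y) by (rewrite hYe; nra).
  destruct (Csqrt_im (X, Y) hY) as [hq0 hq].
  assert (hRf : Rfun (x, y) (zx, zy) = Csqrt (X, Y)) by reflexivity.
  replace ((x, y) * (x, y) + (zx, zy) * (zx, zy))%C with (X, Y) by reflexivity. set (q := Im (Csqrt (X, Y))) in *. change (sqrt (Cmod (X, Y)) * sin (Arg (X, Y) / 2)) with q.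
  set (M := Cmod (X, Y)) in *. unfold Re in hq; simpl fst in hq.
  assert (hcs : X * (x ^ 2 - y ^ 2) + Y * (2 * x * y) <= M * rho ^ 2).
  { pose proof (sqrt_cauchy X Y (x ^ 2 - y ^ 2) (2 * x * y)) as h.
    replace ((x ^ 2 - y ^ 2)² + (2 * x * y)²) with ((x ^ 2 + y ^ 2) * (x ^ 2 + y ^ 2)) in h
      by (unfold Rsqr; ring).
    rewrite sqrt_square in h by nra.
    unfold M, Cmod; simpl fst; simpl snd. rewrite hrho2.
    replace (X ^ 2 + Y ^ 2) with (X² + Y²) by (unfold Rsqr; ring). exact h. }
  assert (hkey : 0 <= y * (2 * x * P * Q - y * (P ^ 2 - Q ^ 2 - c ^ 2))).
  { apply Rmult_le_pos; [lra|].
    replace (2 * x * P * Q - y * (P ^ 2 - Q ^ 2 - c ^ 2))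
      with (2 * c * r * (x * si - y * co) + r ^ 2 * (2 * x * si * co - y * co ^ 2 + y * si ^ 2))
      by (unfold P, Q; ring).
    apply Rplus_le_le_0_compat.
    - apply Rmult_le_pos; [|lra]. nra.
    - apply Rmult_le_pos; [nra|].
      assert (co * (x * si - y * co) >= 0) by nra. nra. }
  assert (hq2 : rho ^ 2 * (2 * q ^ 2) >= 2 * y ^ 2 * (rho ^ 2 - c ^ 2)).
  { rewrite hq. rewrite hXe, hYe in hcs. rewrite hXe. rewrite hrho2 in *. nra. }
  assert (hqy : q >= y - c).
  { destruct (Rle_dec y c); [lra|].
    assert (hr2 : y ^ 2 <= rho ^ 2) by (rewrite hrho2; nra).
    assert (hA1 : rho ^ 2 * (2 * y - c) - y ^ 2 * c >= 2 * y ^ 2 * (y - c)).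
    { assert ((rho ^ 2 - y ^ 2) * (2 * y - c) >= 0) by (apply Rle_ge, Rmult_le_pos; lra). nra. }
    assert (h1 : rho ^ 2 * (y - c) ^ 2 <= y ^ 2 * (rho ^ 2 - c ^ 2)).
    { assert (c * (rho ^ 2 * (2 * y - c) - y ^ 2 * c) >= 0).
      { apply Rle_ge, Rmult_le_pos; [lra|]. assert (0 <= 2 * y ^ 2 * (y - c)) by (apply Rmult_le_pos; nra). lra. }
      nra. }
    assert (hrp : 0 < rho ^ 2) by nra.
    assert (h2 : (y - c) ^ 2 <= q ^ 2).
    { apply (Rmult_le_reg_l (rho ^ 2)); [lra|]. nra. }
    destruct (Rle_dec (y - c) q); [lra|]. exfalso.
    assert (q * q < (y - c) * (y - c)) by (apply Rmult_le_0_lt_compat; lra). nra. }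
  split; nra.
Qed.

Theorem lemmaB5 (a theta : R) (ha : 0 < a) (hth : 0 < theta < PI / 2) :
  (forall theta0 : R, theta <= theta0 < PI / 2 ->
   forall (w : C) (s : R), w <> 0%C ->
     - theta0 + theta <= Arg w <= theta0 ->
     let z := (tau a theta s - RtoC a)%C in
     (Cmod (Rfun w z)) ^ 2 >= cos theta0 * ((Cmod w) ^ 2 + (Cmod z) ^ 2) /\
     cos theta0 * ((Cmod w) ^ 2 + (Cmod z) ^ 2)
       >= (cos theta0) ^ 2 * ((Cmod w) ^ 2 + (Cmod z) ^ 2)) /\
  (exists Cst : R, 0 < Cst /\
   forall (s : R) (w : C), w <> 0%C -> 0 <= Arg w <= theta ->
     let z := (tau a theta s - RtoC a)%C in
     Im (Rfun w z) >= sqrt (cos (theta - Arg w)) * Im w - Cst /\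
     sqrt (cos (theta - Arg w)) * Im w - Cst >= cos (theta - Arg w) * Im w - Cst).
Proof.
  split; [exact (part1 a theta ha hth) | exact (part2 a theta ha hth)].
Qed.
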